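(* Let $n\geq 0$ be an integer and let $\alpha,\beta\in\mathbb{C}$ with $\beta\neq 0$ and $\alpha^2\neq 4\beta$. Fix a square root $\sqrt{\alpha^2-4\beta}$ and write $D=\alpha^2-4\beta$, with $D^{t/2}:=(\sqrt{D})^{t}$. Then $$M_n^{(\alpha,\beta)}=\sum_{k=0}^{n+1}\left(\frac{\alpha+\sqrt{D}}{2}\right)^{n-2k}\frac{\beta^k}{n+1}\binom{n+1}{k}\binom{n+1}{k+1} =\frac{D^{\frac{n+2}{2}}}{\beta}\sum_{k=0}^{n+1}\left(\frac{\alpha}{\sqrt{D}}-1\right)^{k+1}\frac{C_k}{2^{k+1}}\binom{n+1+k}{2k},$$ where $C_k$ is the $k$-th Catalan number and $M_n^{(\alpha,\beta)}$ is the weighted Motzkin number defined in the context.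
   Context: $C_k=\frac{1}{k+1}\binom{2k}{k}$ are the Catalan numbers. For an integer $m\geq 0$ and $a,b\in\mathbb{C}$, the $(a,b)$-Motzkin number is $M_m^{(a,b)}=\sum_{k=0}^{\lfloor m/2\rfloor}\binom{m}{2k}C_k a^{m-2k}b^k$. (Binomial coefficients $\binom{p}{q}$ with $q>p$ are $0$.) *)

(* Defs.v *)
From HB Require Import structures.
From mathcomp Require Import all_boot all_order all_algebra.
From mathcomp Require Import complex.
Set Implicit Arguments. Unset Strict Implicit. Unset Printing Implicit Defensive.
Import Order.TTheory GRing.Theory Num.Theory.
Local Open Scope ring_scope.

Definition catalan (F : fieldType) (k : nat) : F :=
  'C(k.*2, k)%:R / k.+1%:R.

Definition motzkin (F : fieldType) (m : nat) (a b : F) : F :=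
  \sum_(0 <= k < (m./2).+1) 'C(m, k.*2)%:R * catalan F k * a ^+ (m - k.*2) * b ^+ k.

(* Main.v *)
Require Import Defs.
From mathcomp Require Import zify ring.
From HB Require Import structures.
From mathcomp Require Import all_boot all_order all_algebra.
From mathcomp Require Import complex.
Import Order.TTheory GRing.Theory Num.Theory.

Lemma binL a b c : 'C(a,b) * 'C(a-b,c) = 'C(a,b+c) * 'C(b+c,b).
Proof.
case: (leqP (b+c) a) => h; last first.
  case: (leqP b a) => hb.
    rewrite (@bin_small (a-b) c); last lia.
    by rewrite (@bin_small a (b+c)) ?muln0 ?mul0n //.
  by rewrite (@bin_small a b) // (@bin_small a (b+c)) //; lia.
apply/eqP; rewrite -(eqn_pmul2r (_ : 0 < b`! * c`! * (a-b-c)`!)); last first.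
  by rewrite !muln_gt0 !fact_gt0.
have h1 := bin_fact (_ : b <= a); have h2 := bin_fact (_ : c <= a - b).
have h3 := bin_fact h; have h4 := bin_fact (leq_addr c b).
rewrite addKn in h4.
have e : a - b - c = a - (b + c) by rewrite subnDA.
have -> : 'C(a, b) * 'C(a - b, c) * (b`! * c`! * (a - b - c)`!) =
   'C(a, b) * (b`! * ('C(a - b, c) * (c`! * (a - b - c)`!))) by nia.
rewrite h2 ?h1; try lia.
have -> : 'C(a, b + c) * 'C(b + c, b) * (b`! * c`! * (a - b - c)`!) =
   'C(a, b + c) * (('C(b + c, b) * (b`! * c`!)) * (a - (b + c))`!) by rewrite e; nia.
by rewrite h4 h3.
Qed.

Lemma vanderR a b r : \sum_(j < a.+1) 'C(a,j) * 'C(b, j + r) = 'C(a + b, a + r).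
Proof.
elim: a r => [|a IH] r.
  by rewrite big_ord_recl big_ord0 bin0 mul1n addn0.
rewrite big_ord_recl bin0 mul1n add0n.
under eq_bigr => j _ do rewrite /bump /= binS mulnDl.
rewrite big_split /= addnA.
have -> : \sum_(i < a.+1) 'C(a, i) * 'C(b, bump 0 i + r) = 'C(a+b, a + r.+1).
  rewrite -IH; apply: eq_bigr => j _; suff -> : bump 0 j + r = j + r.+1 by []; rewrite /bump /=; lia.
rewrite addSn addnS binS addnC; congr (_ + _).
rewrite -IH.
have -> : \sum_(j<a.+1) 'C(a,j)*'C(b,j+r) = \sum_(j<a.+2) 'C(a,j)*'C(b,j+r).
  by rewrite [RHS]big_ord_recr /= bin_small // mul0n addn0.
rewrite [RHS]big_ord_recl bin0 mul1n add0n.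
by congr (_ + _); apply: eq_bigr => j _.
Qed.

Lemma binN1 n j k : j <= k ->
  'C(n, j.*2) * 'C(j.*2, j) * 'C(n - j.*2, k - j) = 'C(n,k) * 'C(k,j) * 'C(n-k,j).
Proof.
move=> hjk.
have e1 := binL n j j.
have e2 := binL (n-j) j (k-j).
have e3 := binL n j k.
have e4 := binL n k j.
have s1 : 'C(j+k, j) = 'C(k+j, k).
  by rewrite addnC; have := bin_sub (leq_addr j k); rewrite addKn.
rewrite -addnn -e1 -mulnA subnDA e2 subnKC // mulnA e3 s1 (addnC j k) -e4.
by rewrite -!mulnA (mulnC 'C(n-k,j)).
Qed.

Local Open Scope ring_scope.

Lemma exprDnW (F : numFieldType) (u v : F) m N : (m <= N)%N ->
  (u+v)^+m = \sum_(i<N.+1) (u^+(m-i)*v^+i) *+ 'C(m,i).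
Proof.
move=> h; rewrite exprDn (big_ord_widen N.+1 (fun i => (u^+(m-i)*v^+i) *+ 'C(m,i))) //.
rewrite big_mkcond; apply: eq_bigr => i _; case: ifP => // /negbT.
by rewrite -leqNgt => hi; rewrite bin_small ?mulr0n.
Qed.

Lemma reindex (F : numFieldType) N (G : nat -> nat -> F) :
  (forall j k, (j < N)%N -> (N <= k)%N -> G j k = 0) ->
  \sum_(j<N) \sum_(i<N) G j (i+j)%N = \sum_(k<N) \sum_(j<N | (j <= k)%N) G j k.
Proof.
move=> hG.
under [RHS]eq_bigr => k _ do rewrite big_mkcond.
rewrite [RHS]exchange_big /=; apply: eq_bigr => j _.
rewrite -(big_mkord xpredT (fun i => G j (i+j)%N)).
rewrite -(big_mkord xpredT (fun k => if (j <= k)%N then G j k else 0)).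
rewrite [RHS](big_cat_nat (n:=j)) //=; last exact: ltnW (ltn_ord j).
rewrite [X in X + _]big_nat_cond [X in X + _]big1 ?add0r; last first.
  by move=> k /andP[hk _]; case: ifP => // h; exfalso; lia.
rewrite [RHS](eq_big_nat _ _ (F2 := fun k => G j k)); last first.
  by move=> k /andP[hk _]; rewrite hk.
rewrite [RHS](_ : _ = \sum_(0 <= i < N - j) G j (i + j)%N); last first.
  by rewrite -{1}(add0n j) big_addn.
rewrite [LHS](big_cat_nat (n:=(N-j)%N)) //= ?leq_subr //.
rewrite [X in _ + X]big_nat_cond [X in _ + X]big1 ?addr0 //.
move=> i /andP[hi _]; apply: hG => //; lia.
Qed.

Definition nar (F : numFieldType) n k : F := ('C(n.+1,k) * 'C(n.+1,k.+1))%:R / n.+1%:R.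

Lemma expandB (F : numFieldType) M (f : nat -> F) (u v : F) :
  \sum_(k<M.+1) f k * (u+v)^+(M-k) * v^+k =
  \sum_(l<M.+1) (\sum_(k<M.+1 | (k <= l)%N) f k * ('C(M-k, l-k))%:R) * (u^+(M-l) * v^+l).
Proof.
pose G0 := fun k l => f k * ('C(M-k,l-k))%:R * (u^+(M-l) * v^+l).
have hG : forall j k, (j < M.+1)%N -> (M.+1 <= k)%N -> G0 j k = 0.
  by move=> j k hj hk; rewrite /G0 bin_small ?mulr0 ?mul0r //; lia.
under [RHS]eq_bigr => l _ do rewrite big_distrl /=.
refine (eq_trans _ (@reindex F M.+1 G0 hG)); rewrite /G0 /=.
apply: eq_bigr => k _; rewrite (@exprDnW F u v _ _ (leq_subr k M)) big_distrr big_distrl /=.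
apply: eq_bigr => i _; rewrite addnK -subnDA (addnC k i) exprD -mulr_natr; ring.
Qed.

Lemma expandA (F : numFieldType) n (a : nat -> F) (x y : F) :
  (forall j, (n < j.*2)%N -> a j = 0) ->
  \sum_(j<n.+1) a j * (x+y)^+(n - j.*2) * (x*y)^+j =
  \sum_(k<n.+1) (\sum_(j<n.+1 | (j <= k)%N) a j * ('C(n - j.*2, k - j))%:R) * (x^+(n-k) * y^+k).
Proof.
move=> ha.
pose G0 := fun j k => a j * ('C(n - j.*2, k-j))%:R * (x^+(n-k) * y^+k).
have hG : forall j k, (j < n.+1)%N -> (n.+1 <= k)%N -> G0 j k = 0.
  move=> j k hj hk; rewrite /G0; case: (leqP j.*2 n) => h2; last by rewrite ha // !mul0r.
  rewrite bin_small ?mulr0 ?mul0r //; lia.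
under [RHS]eq_bigr => l _ do rewrite big_distrl /=.
refine (eq_trans _ (@reindex F n.+1 G0 hG)); rewrite /G0 /=.
apply: eq_bigr => j _; rewrite (@exprDnW F x y _ _ (leq_subr j.*2 n)) big_distrr big_distrl /=.
apply: eq_bigr => i _; rewrite addnK.
case: (leqP j.*2 n) => h2; last by rewrite ha // !mul0r.
case: (leqP i (n - j.*2)) => hi; last first.
  by rewrite bin_small // !mulr0n !mulr0 !mul0r.
have ex : (n - (i+j) = (n - j.*2 - i) + j)%N by lia.
rewrite ex exprMn !exprD -mulr_natr; ring.
Qed.

Lemma termA (F : numFieldType) n k j : (j <= k)%N -> (k <= n)%N ->
  ('C(n,j.*2)%:R * catalan F j) * ('C(n-j.*2,k-j))%:R
  = ('C(n,k) * ('C(k,j) * 'C((n-k).+1, j.+1)))%:R / (n-k).+1%:R :> F.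
Proof.
move=> hjk hkn; rewrite /catalan mulrA mulrAC -!natrM.
apply/eqP; rewrite eqr_div ?pnatr_eq0 // -!natrM eqr_nat binN1 //.
have h := mul_bin_diag (n-k).+1 j; rewrite /= in h.
by rewrite -!mulnA (mulnC 'C(n - k, j)) h (mulnC j.+1).
Qed.

Lemma coefA (F : numFieldType) n k : (k <= n)%N ->
  \sum_(j<n.+1 | (j <= k)%N) ('C(n,j.*2)%:R * catalan F j) * ('C(n-j.*2,k-j))%:R
  = nar F n k.
Proof.
move=> hkn.
transitivity (\sum_(j<k.+1) ('C(n,j.*2)%:R * catalan F j) * ('C(n-j.*2,k-j))%:R).
  by rewrite (big_ord_widen n.+1 (fun j => ('C(n,j.*2)%:R * catalan F j) * ('C(n-j.*2,k-j))%:R)).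
rewrite (eq_bigr (fun j : 'I_k.+1 => ('C(n,k) * ('C(k,j) * 'C((n-k).+1, j.+1)))%:R / (n-k).+1%:R)); last first.
  by move=> j _; rewrite termA // -ltnS.
rewrite -big_distrl -natr_sum /= -big_distrr /=.
rewrite (_ : \sum_(j<k.+1) 'C(k,j) * 'C((n-k).+1, j.+1) = 'C(k + (n-k).+1, k + 1))%N; last first.
  by rewrite -vanderR; apply: eq_bigr => j _; rewrite addn1.
rewrite (_ : (k + (n - k).+1 = n.+1)%N); last by lia.
rewrite addn1 /nar; apply/eqP; rewrite eqr_div ?pnatr_eq0 // -!natrM eqr_nat.
have h := mul_bin_down n.+1 k; rewrite /= subSn // in h.
by rewrite mulnAC (mulnC 'C(n,k)) h; apply/eqP; lia.
Qed.

Lemma termB (F : numFieldType) n k l : (k <= l)%N ->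
  nar F n k * ('C(n.+1-k, l-k))%:R
  = ('C(n.+1,l) * ('C(l,k) * 'C(n.+1,k.+1)))%:R / n.+1%:R.
Proof.
move=> hkl; rewrite /nar mulrAC -natrM; congr (_ %:R / _).
have e := binL n.+1 k (l-k); rewrite subnKC // in e.
by rewrite mulnAC e -mulnA.
Qed.

Lemma coefB (F : numFieldType) n l : (l <= n.+1)%N ->
  \sum_(k<n.+2 | (k <= l)%N) nar F n k * ('C(n.+1-k, l-k))%:R
  = catalan F l * ('C(n.+1 + l, l.*2))%:R.
Proof.
move=> hl.
transitivity (\sum_(k<l.+1) nar F n k * ('C(n.+1-k, l-k))%:R).
  by rewrite (big_ord_widen n.+2 (fun k => nar F n k * ('C(n.+1-k, l-k))%:R)).
rewrite (eq_bigr (fun k : 'I_l.+1 => ('C(n.+1,l) * ('C(l,k) * 'C(n.+1,k.+1)))%:R / n.+1%:R)); last first.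
  by move=> k _; rewrite termB // -ltnS.
rewrite -big_distrl -natr_sum /= -big_distrr /=.
rewrite (_ : \sum_(k<l.+1) 'C(l,k) * 'C(n.+1, k.+1) = 'C(l + n.+1, l + 1))%N; last first.
  by rewrite -vanderR; apply: eq_bigr => j _; rewrite addn1.
rewrite /catalan mulrAC -natrM; apply/eqP; rewrite eqr_div ?pnatr_eq0 // -!natrM eqr_nat.
have h1 := mul_bin_left (n.+1 + l) l; rewrite addnK in h1.
have h2 := binL (n.+1 + l) l l; rewrite addnK addnn in h2.
rewrite addn1 (addnC l) -mulnA (mulnC _ l.+1) h1 (mulnC 'C(l.*2, l)) -h2.
apply/eqP; lia.
Qed.

Lemma thmA (F : numFieldType) n (x y : F) :
  motzkin n (x+y) (x*y) = \sum_(k<n.+1) nar F n k * (x^+(n-k) * y^+k).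
Proof.
rewrite /motzkin big_mkord.
rewrite (big_ord_widen n.+1 (fun k => 'C(n, k.*2)%:R * catalan F k * (x+y) ^+ (n - k.*2) * (x*y) ^+ k)); last first.
  by rewrite ltnS leq_half_double -addnn; lia.
rewrite big_mkcond /=.
rewrite (eq_bigr (fun k : 'I_n.+1 => 'C(n, k.*2)%:R * catalan F k * (x+y) ^+ (n - k.*2) * (x*y) ^+ k)); last first.
  move=> k _; case: ifP => // /negbT; rewrite -leqNgt ltn_half_double => h.
  by rewrite bin_small // !mul0r.
rewrite (@expandA F n (fun k => 'C(n, k.*2)%:R * catalan F k)); last first.
  by move=> j h; rewrite bin_small // mul0r.
by apply: eq_bigr => k _; rewrite coefA // -ltnS.
Qed.

Lemma thmB (F : numFieldType) n (x y : F) :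
  x * \sum_(k<n.+1) nar F n k * (x^+(n-k) * y^+k)
  = \sum_(l<n.+2) catalan F l * ('C(n.+1+l, l.*2))%:R * ((x-y)^+(n.+1-l) * y^+l).
Proof.
rewrite big_distrr.
transitivity (\sum_(k<n.+2) nar F n k * ((x-y)+y)^+(n.+1-k) * y^+k).
  have hz : nar F n n.+1 = 0 by rewrite /nar (bin_small (ltnSn n.+1)) muln0 mul0r.
  rewrite [RHS]big_ord_recr /= hz !mul0r addr0.
  apply: eq_bigr => k _; rewrite subrK subSn ?exprS; last by rewrite -ltnS.
  ring.
rewrite expandB; apply: eq_bigr => l _; rewrite coefB //.
by rewrite -ltnS.
Qed.

Local Open Scope complex_scope.

Theorem proposition3p2 (R : rcfType) (n : nat) (alpha beta s : R[i])
  (hbeta : beta != 0) (hD : alpha ^+ 2 != 4%:R * beta)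
  (hs : s ^+ 2 = alpha ^+ 2 - 4%:R * beta) :
  motzkin n alpha beta =
    \sum_(0 <= k < n.+2)
      ((alpha + s) / 2%:R) ^ (n%:Z - (k.*2)%:Z) * (beta ^+ k / n.+1%:R)
        * 'C(n.+1, k)%:R * 'C(n.+1, k.+1)%:R
  /\
  motzkin n alpha beta =
    s ^+ n.+2 / beta *
    \sum_(0 <= k < n.+2)
      (alpha / s - 1) ^+ k.+1 * (catalan _ k / 2%:R ^+ k.+1)
        * 'C(n.+1 + k, k.*2)%:R.
Proof.
set x := (alpha + s) / 2%:R; set y := (alpha - s) / 2%:R.
have h2 : (2%:R : R[i]) != 0 by rewrite pnatr_eq0.
have h4 : (4%:R : R[i]) != 0 by rewrite pnatr_eq0.
have hxy : alpha = x + y by rewrite /x /y; field.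
have hb : beta = x * y.
  have -> : beta = (alpha^+2 - s^+2) / 4%:R by rewrite hs; field.
  by rewrite /x /y; field.
have sn0 : s != 0.
  apply/eqP => h0; move: hs; rewrite h0 expr0n /= => /eqP.
  by rewrite eq_sym subr_eq0 (negbTE hD).
have xn0 : x != 0 by apply: contraNneq hbeta => hx; rewrite hb hx mul0r.
have yn0 : y != 0 by apply: contraNneq hbeta => hx; rewrite hb hx mulr0.
have hs' : x - y = s by rewrite /x /y; field.
have e2 : alpha / s - 1 = 2%:R * y / s by rewrite /y; field.
clearbody x y.
split.
  rewrite {1}hxy {1}hb thmA big_mkord [RHS]big_ord_recr /= (bin_small (ltnSn n.+1)) mulr0 addr0.
  apply: eq_bigr => k _.
  have hk : (k <= n)%N by rewrite -ltnS.
  have e : x ^ (n%:Z - (k.*2)%:Z) = x^+(n-k) / x^+k.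
    apply: (canRL (mulfK (expf_neq0 k xn0))).
    rewrite -[x^+k]/(x ^ (k%:Z)) -exprzDr ?unitfE //.
    rewrite (_ : (n%:Z - (k.*2)%:Z + k%:Z = (n-k)%N%:Z)%R) //; lia.
  rewrite e hb exprMn /nar natrM; field.
  by rewrite addrC natr1 pnatr_eq0 expf_neq0.
rewrite {1}hxy {1}hb thmA.
have hB := @thmB _ n x y; rewrite hs' in hB.
rewrite (_ : \sum_(k<n.+1) _ = (\sum_(l<n.+2) catalan _ l * ('C(n.+1+l, l.*2))%:R * (s^+(n.+1-l) * y^+l)) / x); last first.
  by rewrite -hB mulrC mulKf.
rewrite big_mkord big_distrl big_distrr /=; apply: eq_bigr => k _.
have hk : (k <= n.+1)%N by rewrite -ltnS.
have es : s^+n.+2 = s^+(n.+1-k) * s^+k.+1 by rewrite -exprD; congr (_ ^+ _); lia.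
rewrite es e2 hb !exprMn ?exprVn !exprS.
move: (catalan _ k) ('C(n.+1 + k, k.*2)%:R) => c C.
field.
by rewrite !expf_neq0 // sn0 yn0 xn0.
Qed.
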